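(* Let $M\ge2$ and let $\mathcal{P}$ be a Class II source set on $\{1,\dots,M\}$ with $P_1\ge P_2\ge\dots\ge P_M$ for every $P\in\mathcal{P}$, and let $D^{(M-1)}=\sup_{P\in\mathcal{P}}\sum_{i=2}^{M}P_i$. Then for $D\in(0,1]$, $\epsilon^*_{\mathrm{DP}}(\mathcal{P},D)=0$ if and only if $D\ge D^{(M-1)}$.
   Context: A source set is a nonempty set $\mathcal{P}$ of probability distributions on $\{1,\dots,M\}$; Class I means its convex hull contains the uniform distribution; Class II means it is not Class I and a single permutation orders all its distributions decreasingly. A mechanism is an $M\times M$ row-stochastic matrix $Q$ with entries $Q(j|i)$; its diagonal distortions are $D_i=1-Q(i|i)$. $Q$ is $(\mathcal{P},D)$-valid if $\sum_iP_iD_i\le D$ for all $P\in\mathcal{P}$ (average Hamming distortion); $\mathcal{Q}(\mathcal{P},D)$ is the set of these. $\epsilon_{\mathrm{DP}}(Q)=\min\{\epsilon\ge0:Q(\hat x|x_1)\le e^\epsilon Q(\hat x|x_2)\ \forall x_1,x_2,\hat x\}$ ($+\infty$ if none; all-zero columns allowed), and $\epsilon^*_{\mathrm{DP}}(\mathcal{P},D)=\min_{Q\in\mathcal{Q}(\mathcal{P},D)}\epsilon_{\mathrm{DP}}(Q)$. *)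

(* Defs.v *)
From HB Require Import structures.
From mathcomp Require Import all_boot all_order all_algebra.
From mathcomp Require Import all_classical all_reals all_analysis.
From mathcomp Require Import perm.
Set Implicit Arguments. Unset Strict Implicit. Unset Printing Implicit Defensive.
Import Order.TTheory GRing.Theory Num.Theory.
Local Open Scope classical_set_scope.
Local Open Scope ring_scope.

Section Defs.
Variables (R : realType) (M : nat).

(* A probability distribution on {1,...,M}, indexed here by 'I_M = {0,...,M-1}. *)
Definition is_distr (P : 'I_M -> R) : Prop :=
  (forall i, 0 <= P i) /\ \sum_(i < M) P i = 1.

Definition source_set (PP : set ('I_M -> R)) : Prop :=
  PP !=set0 /\ (forall P, PP P -> is_distr P).

(* The uniform distribution lies in the convex hull of PP
   (finite convex combinations of elements of PP). *)
Definition classI (PP : set ('I_M -> R)) : Prop :=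
  exists (n : nat) (w : 'I_n -> R) (Ps : 'I_n -> ('I_M -> R)),
    [/\ forall k, PP (Ps k), forall k, 0 <= w k, \sum_(k < n) w k = 1 &
        forall i, \sum_(k < n) w k * Ps k i = 1 / M%:R].

Definition classII (PP : set ('I_M -> R)) : Prop :=
  ~ classI PP /\
  exists s : {perm 'I_M}, forall P, PP P ->
    forall i j : 'I_M, (i <= j)%N -> P (s j) <= P (s i).

(* Mechanism: row-stochastic M x M matrix, Q i j = Q(j|i). *)
Definition mechanism (Q : 'M[R]_M) : Prop :=
  (forall i j, 0 <= Q i j) /\ (forall i, \sum_(j < M) Q i j = 1).

Definition diag_dist (Q : 'M[R]_M) (i : 'I_M) : R := 1 - Q i i.

Definition valid (PP : set ('I_M -> R)) (D : R) (Q : 'M[R]_M) : Prop :=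
  mechanism Q /\ forall P, PP P -> \sum_(i < M) P i * diag_dist Q i <= D.

(* eps_DP(Q) = min {eps >= 0 : Q(xh|x1) <= e^eps Q(xh|x2)}, +oo if none;
   rendered as the infimum in the extended reals (the set is closed, so
   the infimum is the minimum whenever the set is nonempty). *)
Definition epsDP (Q : 'M[R]_M) : \bar R :=
  ereal_inf [set (e%:E)%E | e in
    [set e : R | 0 <= e /\ forall x1 x2 xh, Q x1 xh <= expR e * Q x2 xh]].

Definition epsDP_star (PP : set ('I_M -> R)) (D : R) : \bar R :=
  ereal_inf [set epsDP Q | Q in valid PP D].

(* D^(M-1) = sup_{P in PP} sum_{i=2}^M P_i  (i.e. indices 1..M-1 of 'I_M). *)
Definition Dmax (PP : set ('I_M -> R)) : R :=
  sup [set \sum_(i < M | (0 < i)%N) P i | P in PP].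

End Defs.

(* Main.v *)
Require Import Defs.
From HB Require Import structures.
From mathcomp Require Import all_boot all_order all_algebra.
From mathcomp Require Import all_classical all_reals all_analysis.
From mathcomp Require Import perm.
From mathcomp Require Import lra.
Import Order.TTheory GRing.Theory Num.Theory.
Local Open Scope classical_set_scope.
Local Open Scope ring_scope.

Lemma sum_tail (R : realType) (M : nat) (i0 : 'I_M) (P : 'I_M -> R) :
  nat_of_ord i0 = 0%N ->
  \sum_(i < M | (0 < i)%N) P i = \sum_(i < M) P i - P i0.
Proof.
move=> h0; rewrite [in RHS](bigD1 i0) //= addrC addrK.
apply: eq_bigl => i; rewrite lt0n; apply/idP/idP.
  by move=> hi; apply/eqP => e; move: hi; rewrite e h0.
by move=> /eqP hi; apply/eqP => e; apply: hi; apply: val_inj; rewrite /= e h0.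
Qed.

Lemma epsDP_ge0 (R : realType) (M : nat) (Q : 'M[R]_M) : (0 <= epsDP Q)%E.
Proof.
apply/ereal_infP => y [e [he _] <-]; by rewrite lee_fin.
Qed.

Theorem lemma5 (R : realType) (M : nat) (PP : set ('I_M -> R)) (D : R) :
  (2 <= M)%N ->
  source_set PP ->
  classII PP ->
  (forall P, PP P -> forall i j : 'I_M, (i <= j)%N -> P j <= P i) ->
  0 < D -> D <= 1 ->
  (epsDP_star PP D = 0%E <-> Dmax PP <= D).
Proof.
move=> M2 [[P0 HP0] Hd] _ Hdec D0 D1.
have M0 : (0 < M)%N by apply: leq_trans M2.
pose i0 : 'I_M := Ordinal M0.
have i00 : nat_of_ord i0 = 0%N by [].
split.
- move=> Heps.
  apply: ge_sup; first by exists (\sum_(i < M | (0 < i)%N) P0 i), P0.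
  move=> _ [P HP <-].
  have [Pge0 Psum] := Hd P HP.
  rewrite (@sum_tail _ _ _ _ i00) Psum.
  apply/ler_addgt0Pr => eta eta0.
  have c1 : 1 < 1 + eta by rewrite ltrDl.
  have : (epsDP_star PP D < (ln (1 + eta))%:E)%E.
    by rewrite Heps lte_fin ln_gt0.
  move=> /ereal_inf_lt [_ [Q [[Qge0 Qsum] HQv] <-]].
  move=> /ereal_inf_lt [_ [e [e0 He] <-]]; rewrite lte_fin => elt.
  have hc : expR e <= 1 + eta.
    rewrite -[1 + eta]lnK; last by rewrite posrE; lra.
    by rewrite ler_expR ltW.
  have HQ : forall x1 x2 xh, Q x1 xh <= (1 + eta) * Q x2 xh.
    move=> x1 x2 xh; apply: le_trans (He x1 x2 xh) _.
    by apply: ler_wpM2r.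
  have H1 := HQv P HP.
  have H2 : \sum_(i < M) P i * diag_dist Q i
      = 1 - \sum_(i < M) P i * Q i i.
    rewrite /diag_dist; under eq_bigr do rewrite mulrBr mulr1.
    by rewrite sumrB Psum.
  have H3 : \sum_(i < M) P i * Q i i <= (1 + eta) * P i0.
    apply: le_trans (_ : \sum_(i < M) P i0 * ((1 + eta) * Q i0 i) <= _).
      apply: ler_sum => i _; apply: ler_pM => //.
      all: try exact: HQ.
      all: try (by apply: Hdec => //; rewrite i00).
      all: try exact: Pge0.
      all: try exact: Qge0.

    rewrite -mulr_sumr -mulr_sumr Qsum mulr1 mulrC.
    done.
  have Pi0 : P i0 <= 1.
    rewrite -Psum (bigD1 i0) //= lerDl; apply: sumr_ge0 => i _; exact: Pge0.
  have := Pge0 i0.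
  nra.
- move=> HD.
  pose Q : 'M[R]_M := \matrix_(i, j) (if j == i0 then 1 else 0).
  have hv : valid PP D Q.
    split.
      split=> [i j|i]; first by rewrite mxE; case: ifP.
      rewrite (bigD1 i0) //= mxE eqxx big1 ?addr0 // => j /negbTE hj.
      by rewrite mxE hj.
    move=> P HP; have [Pge0 Psum] := Hd P HP.
    apply: le_trans HD.
    have -> : \sum_(i < M) P i * diag_dist Q i = \sum_(i < M | (0 < i)%N) P i.
      rewrite (@sum_tail _ _ _ _ i00) (bigD1 i0) //= /diag_dist mxE eqxx subrr mulr0 add0r.
      rewrite [in RHS](bigD1 i0) //= addrC addrK.
      apply: eq_bigr => i hi; rewrite mxE (negbTE hi) subr0 mulr1 //.
    apply: sup_upper_bound; last by exists P.
    split; first by exists (\sum_(i < M | (0 < i)%N) P0 i), P0.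
    exists 1 => _ [P' HP' <-].
    have [P'ge0 P'sum] := Hd P' HP'.
    rewrite (@sum_tail _ _ _ _ i00) P'sum; have := P'ge0 i0; lra.
  have he : epsDP Q = 0%E.
    apply/eqP; rewrite eq_le epsDP_ge0 andbT.
    apply: ge_ereal_inf; exists 0%E => //; exists 0; split => //.
    by move=> x1 x2 xh; rewrite expR0 mul1r !mxE.
  apply/eqP; rewrite eq_le; apply/andP; split.
    by apply: ge_ereal_inf; exists 0%E => //; exists Q.
  by apply/ereal_infP => _ [Q' _ <-]; exact: epsDP_ge0.
Qed.
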